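(* Let $F$ be a commutative field, $1\le h\le n-1$, and let $K$ be a linear complex of $h$-subspaces in $\mathrm{PG}(n,F)$. If $U_1\neq U_2$ are singular $(h-1)$-subspaces of $K$ which are collinear in $\Gamma(n,h-1,F)$ (i.e. $\dim(U_1\cap U_2)=h-2$), then every element of the pencil of $(h-1)$-subspaces determined by $U_1$ and $U_2$ (all $(h-1)$-subspaces containing $U_1\cap U_2$ and contained in $U_1\vee U_2$) is a singular $(h-1)$-subspace of $K$.
   Context: A $d$-subspace is a projective subspace of dimension $d$; $\vee$ denotes join. A linear complex of $h$-subspaces is the set of $h$-subspaces whose Plücker coordinates (image of the span of $v_0,\dots,v_h$ as $F(v_0\wedge\dots\wedge v_h)$ in $\mathbb P(\bigwedge^{h+1}F^{n+1})$) lie in a fixed hyperplane of $\mathbb P(\bigwedge^{h+1}F^{n+1})$. An $(h-1)$-subspace $U$ is singular for $K$ if every $h$-subspace containing $U$ belongs to $K$. $\Gamma(n,h-1,F)$ is the Grassmannian whose points are the $(h-1)$-subspaces and whose lines are pencils of $(h-1)$-subspaces. *)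

(* Defs.v *)
From HB Require Import structures.
From mathcomp Require Import all_boot all_order all_algebra.
Set Implicit Arguments. Unset Strict Implicit. Unset Printing Implicit Defensive.
Import GRing.Theory.
Local Open Scope ring_scope.

(* PG(n,F) = projective space of F^(n+1); row vectors 'rV[F]_(n.+1).
   A projective d-subspace is a vector subspace of dimension d+1. *)

Section Plucker.
Variables (F : fieldType) (n h : nat).

Definition minor (M : 'M[F]_(h.+1, n.+1)) (S : {set 'I_n.+1}) : F :=
  \det (\matrix_(i < h.+1, j < h.+1) M i (nth ord0 (enum S) j)).

(* A hyperplane of P(/\^{h+1} F^{n+1}) given in Plücker coordinates by the
   coefficient vector c (indexed by the (h+1)-subsets of columns); the
   Plücker vector of the rows of M lies on it iff the sum vanishes. *)
Definition plucker_form (c : {ffun {set 'I_n.+1} -> F}) (M : 'M[F]_(h.+1, n.+1)) : F :=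
  \sum_(S : {set 'I_n.+1} | #|S| == h.+1) c S * minor M S.

Definition nondeg_coeffs (c : {ffun {set 'I_n.+1} -> F}) : Prop :=
  exists S : {set 'I_n.+1}, #|S| = h.+1 /\ c S != 0.

Definition in_complex (c : {ffun {set 'I_n.+1} -> F})
    (W : {vspace 'rV[F]_n.+1}) : Prop :=
  \dim W = h.+1 /\
  exists vs : (h.+1).-tuple 'rV[F]_n.+1,
    [/\ free vs, (<<vs>>%VS = W) &
        plucker_form c (\matrix_(i < h.+1) tnth vs i) = 0].

Definition singular (c : {ffun {set 'I_n.+1} -> F}) (U : {vspace 'rV[F]_n.+1}) : Prop :=
  \dim U = h /\
  forall W : {vspace 'rV[F]_n.+1}, \dim W = h.+1 -> (U <= W)%VS -> in_complex c W.

End Plucker.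

(* Main.v *)
Require Import Defs.
From HB Require Import structures.
From mathcomp Require Import all_boot all_order all_algebra.
Set Implicit Arguments. Unset Strict Implicit. Unset Printing Implicit Defensive.
Import GRing.Theory.
Local Open Scope ring_scope.

Section S.
Variables (F : fieldType) (n h : nat) (c : {ffun {set 'I_n.+1} -> F}).

Lemma pf_mul (P : 'M[F]_h.+1) (M : 'M[F]_(h.+1, n.+1)) :
  plucker_form c (P *m M) = \det P * plucker_form c M.
Proof.
rewrite /plucker_form mulr_sumr; apply: eq_bigr => S _.
rewrite mulrCA; congr (_ * _); rewrite /minor -det_mulmx; congr (\det _).
apply/matrixP => i j; rewrite !mxE; apply: eq_bigr => k _; by rewrite mxE.
Qed.

Lemma pf_lin (k : 'I_h.+1) (x y : 'rV[F]_n.+1) (f : 'I_h.+1 -> 'rV[F]_n.+1) :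
  plucker_form c (\matrix_i (if i == k then x + y else f i)) =
  plucker_form c (\matrix_i (if i == k then x else f i)) +
  plucker_form c (\matrix_i (if i == k then y else f i)).
Proof.
rewrite /plucker_form -big_split; apply: eq_bigr => S _.
rewrite /= -mulrDr; congr (_ * _); rewrite /minor.
rewrite (@determinant_multilinear _ _ _ (\matrix_(i < h.+1, j < h.+1) (\matrix_i (if i == k then x else f i)) i (nth ord0 (enum S) j)) (\matrix_(i < h.+1, j < h.+1) (\matrix_i (if i == k then y else f i)) i (nth ord0 (enum S) j)) k 1 1) ?mul1r //.
- apply/rowP => j; rewrite !mxE !eqxx !mxE; by rewrite !mul1r.
- by apply/matrixP => i j; rewrite !mxE; case: eqP => // /eqP; rewrite eq_sym (negbTE (neq_lift _ _)).
- by apply/matrixP => i j; rewrite !mxE; case: eqP => // /eqP; rewrite eq_sym (negbTE (neq_lift _ _)).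
Qed.

Lemma pf_span (vs : (h.+1).-tuple 'rV[F]_n.+1) (f : 'I_h.+1 -> 'rV[F]_n.+1) :
  (forall i, f i \in <<vs>>%VS) ->
  plucker_form c (\matrix_i tnth vs i) = 0 ->
  plucker_form c (\matrix_i f i) = 0.
Proof.
move=> fin H0.
have -> : \matrix_i f i = (\matrix_(i, j) coord vs j (f i)) *m \matrix_i tnth vs i.
  apply/matrixP => i j; rewrite !mxE {1}(coord_span (fin i)) summxE.
  apply: eq_bigr => k _; by rewrite !mxE (tnth_nth 0).
by rewrite pf_mul H0 mulr0.
Qed.

Lemma dim_add_line (U : {vspace 'rV[F]_n.+1}) w :
  w \notin U -> \dim (U + <[w]>)%VS = (\dim U).+1.
Proof.
move=> wU; have w0 : w != 0 by apply: contraNneq wU => ->; rewrite mem0v.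
rewrite dimv_disjoint_sum ?dim_vline ?w0 ?addn1 //.
apply/eqP; rewrite -subv0; apply/subvP => x; rewrite memv_cap => /andP[xU /vlineP[k xk]].
rewrite memv0; subst x; case: (eqVneq k 0) => [->|k0]; first by rewrite scale0r.
have := memvZ k^-1 xU; by rewrite scalerA mulVf // scale1r (negbTE wU).
Qed.

Lemma exists_out (U : {vspace 'rV[F]_n.+1}) :
  (\dim U < n.+1)%N -> exists y, y \notin U.
Proof.
move=> dU; have [/hasP[y _ yU]|] := boolP (has (fun y => y \notin U) (vbasis fullv)).
  by exists y.
move/hasPn => H; exfalso.
have : (fullv <= U)%VS.
  rewrite -(span_basis (vbasisP fullv)); apply/span_subvP => y /H; by rewrite negbK.
move/dimvS; rewrite dimvf /dim /= mul1n => /(leq_trans dU); by rewrite ltnn.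
Qed.

Lemma pf_sing (Ui : {vspace 'rV[F]_n.+1}) w (f : 'I_h.+1 -> 'rV[F]_n.+1) :
  (h < n.+1)%N -> singular h c Ui -> (forall i, f i \in (Ui + <[w]>)%VS) ->
  plucker_form c (\matrix_i f i) = 0.
Proof.
move=> hn [dUi sUi] fin.
have [y [yU sub]] : exists y, y \notin Ui /\ (Ui + <[w]> <= Ui + <[y]>)%VS.
  case: (boolP (w \in Ui)) => wU; last by exists w.
  have [y yU] := exists_out (leq_ltn_trans (eq_leq dUi) hn).
  exists y; split => //; rewrite subv_add addvSl /=.
  apply: subv_trans (addvSl _ _); by rewrite -memvE.
have [_ [vs [_ spv pv]]] := sUi _ (etrans (dim_add_line yU) (congr1 S dUi)) (addvSl _ _).
apply: (pf_span (vs := vs)) => // i; rewrite spv; exact: (subvP sub _ (fin i)).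
Qed.

Lemma exists_diff (U V : {vspace 'rV[F]_n.+1}) :
  (\dim V < \dim U)%N -> exists2 y, y \in U & y \notin V.
Proof.
move=> dU; have [/hasP[y yb yU]|] := boolP (has (fun y => y \notin V) (vbasis U)).
  by exists y => //; exact: vbasis_mem.
move/hasPn => H; exfalso.
have : (U <= V)%VS.
  rewrite -(span_basis (vbasisP U)); apply/span_subvP => y /H; by rewrite negbK.
move/dimvS => /(leq_trans dU); by rewrite ltnn.
Qed.

Lemma eq_dimS (A B : {vspace 'rV[F]_n.+1}) :
  (A <= B)%VS -> \dim B = \dim A -> A = B.
Proof. by move=> AB dAB; apply/eqP; rewrite eqEdim AB dAB leqnn. Qed.

End S.

Theorem corollary5p5 (F : fieldType) (n h : nat)
    (c : {ffun {set 'I_n.+1} -> F}) (U1 U2 : {vspace 'rV[F]_n.+1}) :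
  (1 <= h)%N -> (h <= n - 1)%N ->
  nondeg_coeffs h c ->
  singular h c U1 -> singular h c U2 -> U1 != U2 ->
  \dim (U1 :&: U2)%VS = h.-1 ->
  forall U : {vspace 'rV[F]_n.+1},
    \dim U = h -> (U1 :&: U2 <= U)%VS -> (U <= U1 + U2)%VS ->
    singular h c U.
Proof.
move=> h1 hn _ sU1 sU2 _ dV U dU VU UU12; split => // W dW UW.
have hn' : (h < n.+1)%N by apply: leq_ltn_trans hn _; rewrite ltnS leq_subr.
set V := (U1 :&: U2)%VS in dV VU.
have [u uU uV] : exists2 u, u \in U & u \notin V.
  by apply: exists_diff; rewrite dV dU; case: (h) h1.
have [w wW wU] : exists2 w, w \in W & w \notin U.
  by apply: exists_diff; rewrite dW dU.
set s := vbasis V ++ [:: u; w].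
have szs : size s == h.+1.
  by rewrite size_cat size_tuple dV /=; case: (h) h1 => // m _; rewrite addn2.
pose vs := Tuple szs.
have eU : (V + <[u]>)%VS = U.
  apply: eq_dimS; first by rewrite subv_add VU -memvE.
  by rewrite dim_add_line // dV dU; case: (h) h1.
have eW : (U + <[w]>)%VS = W.
  apply: eq_dimS; first by rewrite subv_add UW -memvE.
  by rewrite dim_add_line // dU dW.
have spv : <<vs>>%VS = W.
  rewrite /= /s span_cat span_cons span_seq1 (span_basis (vbasisP V)).
  by rewrite addvA eU eW.
split => //; exists vs; split => //.
  by rewrite /free spv dW size_tuple.
pose k : 'I_h.+1 := inord h.-1.
have sV : size (vbasis V) = h.-1 by rewrite size_tuple.
have vsk : tnth vs k = u.
  by rewrite (tnth_nth 0) /= /s nth_cat sV inordK ?ltnn ?subnn //; case: (h) h1.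
have other : forall i, i != k -> tnth vs i \in (V + <[w]>)%VS.
  move=> i ik; rewrite (tnth_nth 0) /= /s nth_cat sV.
  case: ltnP => iV.
    apply: subvP (addvSl _ _) _ _; apply: vbasis_mem; apply: mem_nth; by rewrite sV.
  have : (i - h.-1 < 2)%N.
    have e2 : (h.-1 + 2 = h.+1)%N by rewrite addn2 prednK.
    by rewrite ltn_subLR // e2.
  case E: (i - h.-1)%N => [|[|//]] _ /=.
    exfalso; move: ik; rewrite -val_eqE /= inordK; last by case: (h) h1.
    by rewrite eqn_leq iV -subn_eq0 E.
  apply: subvP (addvSr _ _) _ _; exact: memv_line.
have [x1 x1U1 [x2 x2U2 ux]] := memv_addP (subvP UU12 _ uU).
have -> : \matrix_i tnth vs i = \matrix_i (if i == k then x1 + x2 else tnth vs i).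
  apply/matrixP => i j; rewrite !mxE; case: eqP => // ->; by rewrite vsk ux.
rewrite pf_lin.
have hV1 : (V + <[w]> <= U1 + <[w]>)%VS by apply: addvS => //; exact: capvSl.
have hV2 : (V + <[w]> <= U2 + <[w]>)%VS by apply: addvS => //; exact: capvSr.
rewrite (pf_sing (w := w) hn' sU1) ?(pf_sing (w := w) hn' sU2) ?addr0 // => i.
  case: eqP => [_|/eqP ik]; first by apply: subvP (addvSl _ _) _ _.
  exact: subvP hV2 _ (other i ik).
case: eqP => [_|/eqP ik]; first by apply: subvP (addvSl _ _) _ _.
exact: subvP hV1 _ (other i ik).
Qed.
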